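(* Let $T_2=\frac12\log\big(\det(W_\gamma)/\det(W_{\gamma^0})\big)$ and let $0<\underline\phi_n\le\bar\phi_n$. (a) Suppose that, for some $C_3>0$ and $\delta\ge0$, $\inf_{\gamma\in S_1}\lambda_-\big(\frac1nX_{\gamma\setminus\gamma^0}^T(I_n-P_{\gamma^0})X_{\gamma\setminus\gamma^0}\big)\ge C_3n^{-\delta}$. Then for every $\gamma\in S_1$ and all $c_1,\dots,c_p\in[\underline\phi_n,\bar\phi_n]$, $T_2\ge\frac12(|\gamma|-s_n)\log(1+C_3n^{1-\delta}\underline\phi_n)$. (b) Suppose $\gamma^0\ne\emptyset$ and $\varphi_{\max}(n)\le C_2$ for a constant $C_2>0$. Then for every $\gamma\in S_2$ and all $c_1,\dots,c_p\in[\underline\phi_n,\bar\phi_n]$, $T_2\ge-\frac12s_n\log(1+C_2n\bar\phi_n)$.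
   Context: $X$ is an $n\times p$ matrix with $X_\gamma^TX_\gamma$ invertible for every state vector $\gamma$; $\beta^0\in\mathbb R^p$. A state vector is $\gamma\in\{0,1\}^p$; $|\gamma|$ its number of ones; $X_\gamma$ the columns of $X$ indexed by $\{j:\gamma_j=1\}$. $\gamma^0_j=I(\beta^0_j\ne0)$, $s_n=|\gamma^0|$, $\emptyset$ the zero vector. $\gamma\setminus\gamma'$ has $j$-th entry $I(\gamma_j=1,\gamma'_j=0)$; $\gamma\subset\gamma'$ means $\gamma\setminus\gamma'=0$. $P_\gamma=X_\gamma(X_\gamma^TX_\gamma)^{-1}X_\gamma^T$, $P_\emptyset=0$. $S_1=\{\gamma:\gamma^0\subset\gamma,\gamma\neq\gamma^0\}$, $S_2=\{\gamma:\gamma^0\not\subset\gamma\}$. $\lambda_\pm$ are largest/smallest eigenvalues; $\varphi_{\max}(n)=\max_{\gamma\in S_2}\lambda_+\big(\frac1nX_{\gamma^0\setminus\gamma}^TX_{\gamma^0\setminus\gamma}\big)$. With hyperparameters $c_j>0$, $\Sigma=\mathrm{diag}(c_1,\dots,c_p)$, $\Sigma_\gamma$ its diagonal submatrix indexed by $\gamma$, $U_\gamma=\Sigma_\gamma^{-1}+X_\gamma^TX_\gamma$, $W_\gamma=\Sigma_\gamma^{1/2}U_\gamma\Sigma_\gamma^{1/2}$, with conventions $X_\emptyset=0$, $\Sigma_\emptyset=U_\emptyset=W_\emptyset=1$. *)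

(* Defs.v *)
From HB Require Import structures.
From Stdlib Require Import Reals Lra Classical ClassicalEpsilon
  FunctionalExtensionality PropExtensionality.
From mathcomp Require Import all_boot all_order all_algebra.

Set Implicit Arguments.
Unset Strict Implicit.
Unset Printing Implicit Defensive.

Definition Reqb (x y : R) : bool := if Req_EM_T x y then true else false.

Lemma Reqb_axiom : Equality.axiom Reqb.
Proof. by move=> x y; rewrite /Reqb; case: Req_EM_T => h; constructor. Qed.

HB.instance Definition _ := hasDecEq.Build R Reqb_axiom.

Definition Rfind (P : pred R) (n : nat) : option R :=
  match excluded_middle_informative (exists x, P x) with
  | left h => Some (proj1_sig (constructive_indefinite_description _ h))
  | right _ => None
  end.

Lemma Rfind_correct P n x : Rfind P n = Some x -> P x.
Proof.
rewrite /Rfind; case: excluded_middle_informative => // h [<-].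
exact: (proj2_sig (constructive_indefinite_description _ h)).
Qed.

Lemma Rfind_complete (P : pred R) : (exists x, P x) -> exists n, Rfind P n.
Proof.
move=> h; exists 0%N; rewrite /Rfind.
by case: excluded_middle_informative.
Qed.

Lemma Rfind_ext (P Q : pred R) : P =1 Q -> Rfind P =1 Rfind Q.
Proof. by move=> /functional_extensionality ->. Qed.

HB.instance Definition _ :=
  hasChoice.Build R Rfind_correct Rfind_complete Rfind_ext.

Lemma R_addA : ssrfun.associative Rplus. Proof. by move=> x y z; rewrite Rplus_assoc. Qed.
Lemma R_addC : ssrfun.commutative Rplus. Proof. exact: Rplus_comm. Qed.
Lemma R_add0 : ssrfun.left_id R0 Rplus. Proof. exact: Rplus_0_l. Qed.
Lemma R_addN : ssrfun.left_inverse R0 Ropp Rplus. Proof. exact: Rplus_opp_l. Qed.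

HB.instance Definition _ := GRing.isZmodule.Build R R_addA R_addC R_add0 R_addN.

Lemma R_mulA : ssrfun.associative Rmult. Proof. by move=> x y z; rewrite Rmult_assoc. Qed.
Lemma R_mulC : ssrfun.commutative Rmult. Proof. exact: Rmult_comm. Qed.
Lemma R_mul1 : ssrfun.left_id R1 Rmult. Proof. exact: Rmult_1_l. Qed.
Lemma R_mulDl : ssrfun.left_distributive Rmult Rplus.
Proof. by move=> x y z; rewrite Rmult_plus_distr_r. Qed.
Lemma R_one_neq0 : R1 != R0.
Proof. by apply/eqP; exact: R1_neq_R0. Qed.

HB.instance Definition _ :=
  GRing.Zmodule_isComNzRing.Build R R_mulA R_mulC R_mul1 R_mulDl R_one_neq0.

Lemma R_mulVf (x : R) : x != R0 -> Rmult (Rinv x) x = R1.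
Proof. by move=> /eqP h; exact: Rinv_l. Qed.
Lemma R_inv0 : Rinv R0 = R0. Proof. exact: Rinv_0. Qed.

HB.instance Definition _ := GRing.ComNzRing_isField.Build R R_mulVf R_inv0.

Local Open Scope ring_scope.

(* A state vector gamma in {0,1}^p is represented by the set {j : gamma_j = 1}
   : {set 'I_p}.  |gamma| = #|gamma|, gamma \ gamma' = gamma :\: gamma',
   gamma subset gamma' = gamma \subset gamma', empty vector = set0. *)

Definition gamma0 (p : nat) (beta0 : 'I_p -> R) : {set 'I_p} :=
  [set j | beta0 j != 0].

(* X_gamma : the columns of X indexed by gamma, in increasing order
   (n x 0 matrix, i.e. "X_emptyset = 0", when gamma is empty). *)
Definition Xsub (n p : nat) (X : 'M[R]_(n, p)) (g : {set 'I_p})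
  : 'M[R]_(n, #|g|) :=
  colsub (fun k : 'I_#|g| => enum_val k) X.

Definition Pproj (n p : nat) (X : 'M[R]_(n, p)) (g : {set 'I_p}) : 'M[R]_n :=
  Xsub X g *m invmx ((Xsub X g)^T *m Xsub X g) *m (Xsub X g)^T.

Definition Sig (p : nat) (c : 'I_p -> R) (g : {set 'I_p}) : 'M[R]_#|g| :=
  diag_mx (\row_(k < #|g|) c (enum_val k)).
Definition Sig_half (p : nat) (c : 'I_p -> R) (g : {set 'I_p}) : 'M[R]_#|g| :=
  diag_mx (\row_(k < #|g|) sqrt (c (enum_val k))).

Definition Umat (n p : nat) (X : 'M[R]_(n, p)) (c : 'I_p -> R)
  (g : {set 'I_p}) : 'M[R]_#|g| :=
  invmx (Sig c g) + (Xsub X g)^T *m Xsub X g.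

(* W_gamma = Sigma_gamma^{1/2} U_gamma Sigma_gamma^{1/2}
   (a 0 x 0 matrix, with determinant 1, when gamma is empty) *)
Definition Wmat (n p : nat) (X : 'M[R]_(n, p)) (c : 'I_p -> R)
  (g : {set 'I_p}) : 'M[R]_#|g| :=
  Sig_half c g *m Umat X c g *m Sig_half c g.

Definition T2 (n p : nat) (X : 'M[R]_(n, p)) (c : 'I_p -> R)
  (g g0 : {set 'I_p}) : R :=
  Rmult (Rinv 2) (ln (Rdiv (\det (Wmat X c g)) (\det (Wmat X c g0)))).

Definition Mres (n p : nat) (X : 'M[R]_(n, p)) (g g0 : {set 'I_p})
  : 'M[R]_#|g :\: g0| :=
  (n%:R)^-1 *: ((Xsub X (g :\: g0))^T *m (1%:M - Pproj X g0) *m Xsub X (g :\: g0)).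

Definition Mgram (n p : nat) (X : 'M[R]_(n, p)) (g g0 : {set 'I_p})
  : 'M[R]_#|g0 :\: g| :=
  (n%:R)^-1 *: ((Xsub X (g0 :\: g))^T *m Xsub X (g0 :\: g)).

Definition inS1 (p : nat) (g0 g : {set 'I_p}) : bool := (g0 \subset g) && (g != g0).
Definition inS2 (p : nat) (g0 g : {set 'I_p}) : bool := ~~ (g0 \subset g).

(* Main.v *)
Require Import Defs.
From HB Require Import structures.
From Stdlib Require Import Reals Lra.
From mathcomp Require Import all_boot all_order all_algebra.
From mathcomp.algebra_tactics Require Import ring lra.
Set Implicit Arguments.
Unset Strict Implicit.
Unset Printing Implicit Defensive.
Import Order.TTheory GRing.Theory Num.Theory.

Section NumR.
Local Open Scope R_scope.
Definition Rleb r1 r2 := if Rle_dec r1 r2 is left _ then true else false.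
Definition Rltb r1 r2 := Rleb r1 r2 && (r1 != r2).
Lemma RlebP r1 r2 : reflect (r1 <= r2) (Rleb r1 r2).
Proof. by rewrite /Rleb; apply: (iffP idP); case: Rle_dec. Qed.
Lemma RltbP r1 r2 : reflect (r1 < r2) (Rltb r1 r2).
Proof.
rewrite /Rltb /Rleb; apply: (iffP idP); case: Rle_dec=> //=.
- by case=> // r1Er2 /eqP[].
- by move=> _ r1Lr2; apply/eqP/Rlt_not_eq.
by move=> Nr1Lr2 r1Lr2; case: Nr1Lr2; left.
Qed.
Lemma Rleb_norm_add x y : Rleb (Rabs (x + y)) (Rabs x + Rabs y).
Proof. by apply/RlebP/Rabs_triang. Qed.
Lemma addr_Rgtb0 x y : Rltb 0 x -> Rltb 0 y -> Rltb 0 (x + y).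
Proof. by move/RltbP=> Hx /RltbP Hy; apply/RltbP/Rplus_lt_0_compat. Qed.
Lemma Rnorm0_eq0 x : Rabs x = 0 -> x = 0.
Proof. by move=> H; case: (x == 0) /eqP=> // /Rabs_no_R0. Qed.
Lemma Rleb_leVge x y : Rleb 0 x -> Rleb 0 y -> (Rleb x y) || (Rleb y x).
Proof.
move/RlebP=> Hx /RlebP Hy; case: (Rlt_le_dec x y).
by move/Rlt_le/RlebP=> ->.
by move/RlebP=> ->; rewrite orbT.
Qed.
Lemma RnormM : {morph Rabs : x y / x * y}.
Proof. exact: Rabs_mult. Qed.
Lemma Rleb_def x y : (Rleb x y) = (Rabs (y - x) == y - x).
Proof.
apply/(sameP (RlebP x y))/(iffP idP)=> [/eqP H| /Rle_minus H].
  apply: Rminus_le; rewrite -Ropp_minus_distr.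
  apply/Rge_le/Ropp_0_le_ge_contravar.
  by rewrite -H; apply: Rabs_pos.
apply/eqP/Rabs_pos_eq.
rewrite -Ropp_minus_distr.
by apply/Ropp_0_ge_le_contravar/Rle_ge.
Qed.
Lemma Rltb_def x y : (Rltb x y) = (y != x) && (Rleb x y).
Proof.
apply/(sameP (RltbP x y))/(iffP idP).
  case/andP=> /eqP H /RlebP/Rle_not_gt H2.
  by case: (Rtotal_order x y)=> // [][] // /esym.
move=> H; apply/andP; split; [apply/eqP|apply/RlebP].
  exact: Rgt_not_eq.
exact: Rlt_le.
Qed.
HB.instance Definition _ := Num.IntegralDomain_isNumRing.Build R
  Rleb_norm_add addr_Rgtb0 Rnorm0_eq0 Rleb_leVge RnormM Rleb_def Rltb_def.
Lemma RleP : forall x y, reflect (Rle x y) (x <= y)%R.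
Proof. exact: RlebP. Qed.
Lemma RltP : forall x y, reflect (Rlt x y) (x < y)%R.
Proof. exact: RltbP. Qed.
Lemma R_total : total (<=%O : rel R).
Proof.
move=> x y; case: (Rle_lt_dec x y) => [/RleP -> //|/Rlt_le/RleP ->];
  by rewrite orbT.
Qed.
HB.instance Definition _ := Order.POrder_isTotal.Build _ R R_total.
End NumR.

Local Open Scope ring_scope.
Lemma addRE (x y : R) : (x + y)%R = Rplus x y. Proof. by []. Qed.
Lemma mulRE (x y : R) : (x * y)%R = Rmult x y. Proof. by []. Qed.
Lemma oppRE (x : R) : (- x)%R = Ropp x. Proof. by []. Qed.
Lemma invRE (x : R) : (x^-1)%R = Rinv x. Proof. by []. Qed.
Lemma zeroRE : (0 : R)%R = R0. Proof. by []. Qed.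
Lemma oneRE : (1 : R)%R = R1. Proof. by []. Qed.

Local Open Scope ring_scope.

Section LA.
Variable F : realFieldType.

Lemma mxDE m n (A B : 'M[F]_(m,n)) i j : (A + B) i j = A i j + B i j.
Proof. by rewrite mxE. Qed.
Lemma mxNE m n (A : 'M[F]_(m,n)) i j : (- A) i j = - A i j.
Proof. by rewrite mxE. Qed.
Lemma mxBE m n (A B : 'M[F]_(m,n)) i j : (A - B) i j = A i j - B i j.
Proof. by rewrite !mxE. Qed.
Lemma mxZE m n a (A : 'M[F]_(m,n)) i j : (a *: A) i j = a * A i j.
Proof. by rewrite mxE. Qed.

Definition bf k (A : 'M[F]_k) (x y : 'rV[F]_k) : F := (x *m A *m y^T) 0 0.
Definition qf k (A : 'M[F]_k) (x : 'rV[F]_k) : F := bf A x x.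
Definition nrm k (x : 'rV[F]_k) : F := (x *m x^T) 0 0.

Lemma nrmE k (x : 'rV[F]_k) : nrm x = \sum_i x 0 i ^+ 2.
Proof. by rewrite /nrm !mxE; apply: eq_bigr => i _; rewrite mxE expr2. Qed.

Lemma nrm0 k : nrm (0 : 'rV[F]_k) = 0.
Proof. by rewrite /nrm mul0mx mxE. Qed.

Lemma nrm_ge0 k (x : 'rV[F]_k) : 0 <= nrm x.
Proof. by rewrite nrmE sumr_ge0 // => i _; exact: sqr_ge0. Qed.

Lemma nrm_eq0 k (x : 'rV[F]_k) : nrm x = 0 -> x = 0.
Proof.
rewrite nrmE => /psumr_eq0P H; apply/matrixP => i j.
rewrite ord1 mxE; apply/eqP; rewrite -sqrf_eq0; apply/eqP; apply: H => //.
by move=> l _; exact: sqr_ge0.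
Qed.

Lemma coord_le_nrm k (x : 'rV[F]_k) i : x 0 i ^+ 2 <= nrm x.
Proof.
rewrite nrmE (bigD1 i) //= lerDl sumr_ge0 // => j _; exact: sqr_ge0.
Qed.

Lemma bfE k (A : 'M[F]_k) x y :
  bf A x y = \sum_j \sum_i x 0 i * A i j * y 0 j.
Proof.
rewrite /bf mxE; apply: eq_bigr => j _; rewrite !mxE big_distrl /=.
by [].
Qed.
Lemma dummy0 : True. Proof. by [].
Qed.

Lemma bfC k (A : 'M[F]_k) x y : A^T = A -> bf A x y = bf A y x.
Proof.
move=> HA; rewrite /bf; transitivity ((x *m A *m y^T)^T 0 0); first by rewrite [RHS]mxE.
by rewrite !trmx_mul trmxK HA mulmxA.
Qed.

Lemma bfDl k (A : 'M[F]_k) x y z : bf A (x + y) z = bf A x z + bf A y z.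
Proof. by rewrite /bf !mulmxDl mxE. Qed.
Lemma bfDr k (A : 'M[F]_k) x y z : bf A z (x + y) = bf A z x + bf A z y.
Proof. by rewrite /bf linearD /= !mulmxDr mxE. Qed.
Lemma bfZl k (A : 'M[F]_k) a x z : bf A (a *: x) z = a * bf A x z.
Proof. by rewrite /bf -!scalemxAl mxE. Qed.
Lemma bfZr k (A : 'M[F]_k) a x z : bf A z (a *: x) = a * bf A z x.
Proof. by rewrite /bf linearZ /= -!scalemxAr mxE. Qed.

Lemma qf_line k (A : 'M[F]_k) x y t :
  qf A (x + t *: y) = qf A x + t * (bf A x y + bf A y x) + t ^+ 2 * qf A y.
Proof.
rewrite /qf bfDl !bfDr !bfZl !bfZr; ring.
Qed.

Lemma nrm_bf k (x : 'rV[F]_k) : nrm x = bf 1%:M x x.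
Proof. by rewrite /nrm /bf mulmx1. Qed.

Lemma CS k (A : 'M[F]_k) x y : A^T = A -> (forall z, 0 <= qf A z) ->
  bf A x y ^+ 2 <= qf A x * qf A y.
Proof.
move=> HA Hp; have Ht := fun t => Hp (x + t *: y).
set a := qf A x; set b := bf A x y; set c := qf A y.
have Hl : forall t, 0 <= a + 2 * t * b + t ^+ 2 * c.
  by move=> t; have := Ht t; rewrite qf_line (bfC y x HA) -/a -/b -/c; lra.
have ha : 0 <= a := Hp x; have hc : 0 <= c := Hp y.
have [c0|cpos] := eqVneq c 0.
  have [b0|bn0] := eqVneq b 0.
    by rewrite b0 c0; lra.
  have := Hl (- (a + 1) / (2 * b)).
  have e : 2 * (- (a + 1) / (2 * b)) * b = - (a + 1).
    by field.
  rewrite e.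
  rewrite c0; lra.
have cp : 0 < c by rewrite lt_def cpos hc.
have := Hl (- b / c).
have -> : 2 * (- b / c) * b = - 2 * b ^+ 2 / c by field.
have -> : (- b / c) ^+ 2 * c = b ^+ 2 / c by field.
move=> h.
have : 0 <= a - b ^+ 2 / c by lra.
rewrite subr_ge0 ler_pdivrMr //; lra.
Qed.

Lemma qf_bound k (A : 'M[F]_k) : exists K, 0 <= K /\
  forall x, `|qf A x| <= K * nrm x.
Proof.
exists (\sum_j \sum_i `|A i j|); split.
  by apply: sumr_ge0 => j _; apply: sumr_ge0 => i _.
move=> x; rewrite /qf bfE; apply: le_trans (ler_norm_sum _ _ _) _.
rewrite mulr_suml; apply: ler_sum => j _.
apply: le_trans (ler_norm_sum _ _ _) _.
rewrite mulr_suml; apply: ler_sum => i _.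
rewrite !normrM.
have h1 := coord_le_nrm x i; have h2 := coord_le_nrm x j.
rewrite -(real_normK (num_real (x 0 i))) in h1.
rewrite -(real_normK (num_real (x 0 j))) in h2.
have p1 := normr_ge0 (x 0 i); have p2 := normr_ge0 (x 0 j).
have p3 := normr_ge0 (A i j).
set p := `|x 0 i| in h1 p1 *; set q := `|x 0 j| in h2 p2 *.
set N := nrm x in h1 h2 *.
have hpq : p * q <= N.
  have : 0 <= (p - q) ^+ 2 by exact: sqr_ge0.
  rewrite !expr2 in h1 h2 *; nra.
rewrite mulrAC -mulrA mulrA mulrC; exact: ler_wpM2l.
Qed.

End LA.

Local Open Scope ring_scope.

Section LA2.
Variable F : realFieldType.

Lemma sylvester m k (A : 'M[F]_(m,k)) (B : 'M[F]_(k,m)) :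
  \det (1%:M + A *m B) = \det (1%:M + B *m A).
Proof.
have e1 : block_mx 1%:M (-A) B 1%:M =
   block_mx 1%:M 0 B 1%:M *m block_mx 1%:M (-A) 0 (1%:M + B *m A).
  rewrite mulmx_block ?mul1mx ?mul0mx ?mulmx0 ?addr0 ?add0r ?mulmxN ?mulmx1.
  by rewrite addrC addrK.
have e2 : block_mx 1%:M (-A) B 1%:M =
   block_mx (1%:M + A *m B) (-A) 0 1%:M *m block_mx 1%:M 0 B 1%:M.
  rewrite mulmx_block ?mul1mx ?mul0mx ?mulmx0 ?mulmx1 ?add0r ?addr0.
  by rewrite mulNmx addrK.
have := congr1 determinant (etrans (esym e1) e2).
by rewrite !det_mulmx (det_lblock (1%:M : 'M[F]_m)) (det_ublock (1%:M : 'M[F]_m)) (det_ublock (1%:M + A *m B)) !det1 !mul1r !mulr1 => ->.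
Qed.

Lemma mx11_mul (P Q : 'M[F]_1) : (P *m Q) 0 0 = P 0 0 * Q 0 0.
Proof. by rewrite mxE big_ord1. Qed.

Lemma tr11 (P : 'M[F]_1) : P^T 0 0 = P 0 0.
Proof. by rewrite mxE. Qed.

Lemma qf0 k (M : 'M[F]_k) : qf M 0 = 0.
Proof. by rewrite /qf /bf mul0mx mul0mx mxE. Qed.

Section Step.
Variables (k : nat) (M : 'M[F]_(1 + k)).
Hypothesis HT : M^T = M.
Let a := ulsubmx M.
Let r := ursubmx M.
Let c := dlsubmx M.
Let M' := drsubmx M.
Let al := a 0 0.

Lemma hc : c = r^T.
Proof. by rewrite /c /r trmx_ursub HT. Qed.
Lemma hM' : M'^T = M'.
Proof. by rewrite /M' trmx_drsub HT. Qed.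
Lemma eM : M = block_mx (al%:M) r (r^T) M'.
Proof.
rewrite -hc; have -> : al%:M = a.
  by apply/matrixP => i j; rewrite !ord1 mxE eqxx mulr1n.
by rewrite submxK.
Qed.

Definition rho (y : 'rV[F]_k) := (r *m y^T) 0 0.

Lemma qf_row (s : F) (y : 'rV[F]_k) :
  qf M (row_mx (s%:M) y) = al * s ^+ 2 + 2 * s * rho y + qf M' y.
Proof.
rewrite /qf /bf eM mul_row_block tr_row_mx mul_row_col tr_scalar_mx.
rewrite !mul_scalar_mx mul_mx_scalar !mulmxDl -scalemxAl.
rewrite !mxE eqxx mulr1n.
have -> : \sum_j y 0 j * r^T j 0 = rho y.
  by rewrite /rho mxE; apply: eq_bigr => j _; rewrite !mxE mulrC.
have -> : \sum_j r 0 j * y^T j 0 = rho y by rewrite /rho mxE.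
have -> : \sum_j (y *m M') 0 j * y^T j 0 = qf M' y by rewrite /qf /bf mxE.
ring.
Qed.

Lemma nrm_row (s : F) (y : 'rV[F]_k) :
  nrm (row_mx (s%:M) y) = s ^+ 2 + nrm y.
Proof.
rewrite /nrm tr_row_mx mul_row_col tr_scalar_mx mul_scalar_mx.
by rewrite [in LHS]mxE !mxE eqxx mulr1n expr2.
Qed.

Definition Schur := M' - al^-1 *: (r^T *m r).

Lemma det_schur : al != 0 -> \det M = al * \det Schur.
Proof.
move=> hal; rewrite {1}eM.
have -> : block_mx al%:M r r^T M' =
   block_mx 1%:M 0 (al^-1 *: r^T) 1%:M *m block_mx al%:M r 0 Schur.
  rewrite mulmx_block ?mul1mx ?mul0mx ?mulmx0 ?addr0 ?add0r.
  rewrite mul_mx_scalar scalerA divff // scale1r.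
  by rewrite /Schur -scalemxAl addrC subrK.
rewrite det_mulmx (det_lblock (1%:M : 'M[F]_1)) (det_ublock (al%:M : 'M[F]_1)).
by rewrite !det1 !mul1r det_scalar1.
Qed.

Lemma hSchur : Schur^T = Schur.
Proof.
by rewrite /Schur linearB /= linearZ /= trmx_mul trmxK hM'.
Qed.

Lemma qf_schur (y : 'rV[F]_k) : qf Schur y = qf M' y - al^-1 * rho y ^+ 2.
Proof.
rewrite /qf /bf /Schur mulmxBr mulmxBl mxBE.
rewrite -scalemxAr -scalemxAl mxZE.
rewrite !mulmxA -(mulmxA (y *m r^T)) mx11_mul.
have -> : (y *m r^T) 0 0 = rho y.
  by rewrite /rho -tr11 trmx_mul trmxK.
by rewrite /rho expr2 mulrA.
Qed.

End Step.
Lemma det_bounds k (M : 'M[F]_k) mu nu : M^T = M -> 0 < mu ->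
  (forall x, mu * nrm x <= qf M x) -> (forall x, qf M x <= nu * nrm x) ->
  mu ^+ k <= \det M <= nu ^+ k.
Proof.
elim: k M => [|k IH] M HT Hmu Hlo Hup.
  by rewrite det_mx00 !expr0 lexx.
pose M1 : 'M[F]_(1 + k) := M.
have HT1 : M1^T = M1 := HT.
have Hlo1 : forall x, mu * nrm x <= qf M1 x := Hlo.
have Hup1 : forall x, qf M1 x <= nu * nrm x := Hup.
change (mu ^+ k.+1 <= \det M1 <= nu ^+ k.+1).
clearbody M1; clear M HT Hlo Hup.
set al := ulsubmx M1 0 0.
have qr : forall s y, qf M1 (row_mx s%:M y) = al * s ^+ 2 + 2 * s * rho M1 y + qf (drsubmx M1) y := qf_row HT1.
have qs : forall y, qf (Schur M1) y = qf (drsubmx M1) y - al^-1 * rho M1 y ^+ 2 .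
  by move=> y; apply: qf_schur.
have ds : al != 0 -> \det M1 = al * \det (Schur M1) .
  by move=> h; apply: det_schur.
have nr := nrm_row (k:=k).
have rho0 : rho M1 0 = 0 by rewrite /rho trmx0 mulmx0 mxE.
have [hal1 hal2] : mu <= al /\ al <= nu.
  have := Hlo1 (row_mx 1%:M 0); have := Hup1 (row_mx 1%:M 0).
  rewrite qr nr rho0 qf0 nrm0 expr1n.
  move=> h1 h2; split; lra.
have alp : 0 < al by lra.
have hal0 : al != 0 by rewrite gt_eqF.
have Slo : forall y, mu * nrm y <= qf (Schur M1) y.
  move=> y; rewrite qs.
  have := Hlo1 (row_mx ((- rho M1 y / al)%:M) y); rewrite qr nr.
  have e : al * (- rho M1 y / al) ^+ 2 + 2 * (- rho M1 y / al) * rho M1 y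
     = - (al^-1 * rho M1 y ^+ 2) by field.
  have hs := sqr_ge0 (- rho M1 y / al).
  have hm : 0 <= mu * (- rho M1 y / al) ^+ 2 by apply: mulr_ge0; lra.
  lra.
have Sup : forall y, qf (Schur M1) y <= nu * nrm y.
  move=> y; rewrite qs.
  have := Hup1 (row_mx (0 : F)%:M y); rewrite qr nr expr0n /= ?mul0r ?mulr0 ?add0r ?addr0.
  have : 0 <= al^-1 * rho M1 y ^+ 2 by apply: mulr_ge0; [rewrite invr_ge0; lra | exact: sqr_ge0].
  lra.
have /andP[IHl IHu] := IH _ (hSchur HT1) Hmu Slo Sup.
rewrite ds // !exprS; apply/andP; split.
  have : 0 <= mu ^+ k by apply: exprn_ge0; lra.
  move=> h; apply: ler_pM => //; lra.
have : 0 <= mu ^+ k by apply: exprn_ge0; lra.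
move=> h; apply: ler_pM => //; lra.
Qed.

End LA2.

Local Open Scope ring_scope.

Section LA3.
Variable F : realFieldType.

Lemma qf_shift k (A : 'M[F]_k) t x : qf (A - t%:M) x = qf A x - t * nrm x.
Proof.
by rewrite /qf /bf mulmxBr mulmxBl mxBE mul_mx_scalar -scalemxAl mxZE.
Qed.

Lemma coercive k (B : 'M[F]_k) : B^T = B -> (forall z, 0 <= qf B z) ->
  B \in unitmx -> exists2 e, 0 < e & forall x, e * nrm x <= qf B x.
Proof.
move=> HT Hp Hu.
have [K [K0 HK]] := qf_bound (invmx B).
exists (K + 1)^-1; first by rewrite invr_gt0; lra.
move=> x; set z := x *m invmx B.
have xz : x = z *m B by rewrite /z -mulmxA mulVmx // mulmx1.
have h1 : nrm x = bf B z x by rewrite /nrm /bf -xz.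
have h2 : qf B z = qf (invmx B) x.
  by rewrite /qf /bf -xz /z trmx_mul trmx_inv HT mulmxA.
have hc := CS z x HT Hp.
rewrite -h1 h2 in hc.
have hq := Hp x.
have hK := HK x.
have hN := nrm_ge0 x.
set N := nrm x in hc hK hN *; set Q := qf B x in hc hq *; set Q' := qf (invmx B) x in hc hK.
have hQ' : Q' <= K * N by apply: le_trans (ler_norm _) hK.
have hNQ : N ^+ 2 <= K * N * Q.
  apply: le_trans hc _; apply: ler_wpM2r => //.
rewrite ler_pdivrMl; last by lra.
have [N0|Npos] := eqVneq N 0.
  by rewrite N0; apply: mulr_ge0 => //; lra.
have Np : 0 < N by rewrite lt_def Npos hN.
have : N <= K * Q.
  rewrite -(ler_pM2l Np); rewrite expr2 in hNQ; lra.
have : 0 <= Q by [].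
nra.
Qed.

End LA3.

Local Open Scope ring_scope.

Lemma not_eig_unit k (M : 'M[R]_k) a : ~~ eigenvalue M a -> (M - a%:M) \in unitmx.
Proof.
by rewrite /eigenvalue /eigenspace negbK kermx_eq0 row_free_unit.
Qed.

Lemma eig_lb k (M : 'M[R]_k) (lam : R) : M^T = M ->
  (forall a, eigenvalue M a -> lam <= a) -> forall x, lam * nrm x <= qf M x.
Proof.
move=> HT He.
set B := M - lam%:M.
have HBT : B^T = B by rewrite /B linearB /= tr_scalar_mx HT.
suff H : forall x, 0 <= qf B x.
  by move=> x; have := H x; rewrite /B qf_shift subr_ge0.
have [K [K0 HK]] := qf_bound B.
pose E := fun t : R => (t <= 0) /\ (forall x, t * nrm x <= qf B x).
have hb : bound E.
  exists 0%R => t [/RleP h _]; exact: h.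
have hne : exists t, E t.
  exists (- K); split; first by rewrite oppr_le0.
  move=> x; have := HK x; rewrite ler_norml mulNr => /andP[h _]; exact: h.
have [ts [Hub Hlub]] := completeness E hb hne.
have ts0 : ts <= 0.
  by apply/RleP; apply: Hlub => t [/RleP h _].
have Hcl : forall x, ts * nrm x <= qf B x.
  move=> x; have [N0|Npos] := eqVneq (nrm x) 0.
    by rewrite N0 mulr0 (nrm_eq0 N0) qf0.
  have Np : 0 < nrm x by rewrite lt_def Npos nrm_ge0.
  have : ts <= qf B x / nrm x.
    apply/RleP; apply: Hlub => t [_ Ht]; apply/RleP.
    by rewrite ler_pdivlMr.
  by rewrite ler_pdivlMr // mulrC.
have [tsn|] := ltP ts 0; last first.
  move=> h x; have := Hcl x.
  have -> : ts = 0 by apply/eqP; rewrite eq_le ts0 h.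
  by rewrite mul0r.
set C := B - ts%:M.
have HCT : C^T = C by rewrite /C linearB /= tr_scalar_mx HBT.
have HCp : forall z, 0 <= qf C z by move=> z; rewrite /C qf_shift subr_ge0.
have HCu : C \in unitmx.
  have -> : C = M - (lam + ts)%:M by rewrite /C /B raddfD /= opprD addrA.
  apply: not_eig_unit; apply/negP => /He; lra.
have [e ep He'] := coercive HCT HCp HCu.
have HB : forall x, (ts + e) * nrm x <= qf B x.
  move=> x; have := He' x; rewrite /C qf_shift mulrDl; lra.
have [hle|hlt] := leP e (- ts).
  have : E (ts + e).
    split; first by lra.
    exact: HB.
  move/Hub/RleP; lra.
have : E 0.
  split => // x; rewrite mul0r.
  have := HB x; have := nrm_ge0 x.
  have : 0 <= ts + e by lra.
  move=> h1 h2 h3; apply: le_trans h3; exact: mulr_ge0.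
move/Hub/RleP; lra.
Qed.

Local Open Scope ring_scope.

Lemma qf_add k (A B : 'M[R]_k) v : qf (A + B) v = qf A v + qf B v.
Proof. by rewrite /qf /bf mulmxDr mulmxDl mxDE. Qed.

Lemma qf1 k (v : 'rV[R]_k) : qf 1%:M v = nrm v.
Proof. by rewrite nrm_bf. Qed.

Lemma qf_diag k (d : 'rV[R]_k) w : qf (diag_mx d) w = \sum_i d 0 i * w 0 i ^+ 2.
Proof.
rewrite /qf /bf mul_mx_diag mxE; apply: eq_bigr => i _; rewrite !mxE; ring.
Qed.

Lemma qf_conj m k (A : 'M[R]_k) (B : 'M[R]_(m,k)) v :
  qf (B *m A *m B^T) v = qf A (v *m B).
Proof. by rewrite /qf /bf trmx_mul !mulmxA. Qed.

Section Model.
Variables (n p : nat) (X : 'M[R]_(n,p)) (c : 'I_p -> R) (phil phiu : R).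
Hypothesis hphil : 0 < phil.
Hypothesis hcb : forall j, phil <= c j <= phiu.

Lemma cpos j : 0 < c j.
Proof. have hp := hphil; have /andP[h _] := hcb j; lra. Qed.

Definition Q (g : {set 'I_p}) : 'M[R]_n := Xsub X g *m Sig c g *m (Xsub X g)^T.
Definition Fm g : 'M[R]_n := 1%:M + Q g.

Lemma Q_sum g : Q g = \sum_(j in g) c j *: (col j X *m (col j X)^T).
Proof.
apply/matrixP => i i'; rewrite /Q /Sig mul_mx_diag summxE mxE.
rewrite (big_enum_val (fun j => (c j *: (col j X *m (col j X)^T)) i i')) /=.
apply: eq_bigr => k _; rewrite !mxE big_ord1 !mxE; ring.
Qed.

Lemma Q_split g A : Q g = Q (g :&: A) + Q (g :\: A).
Proof. by rewrite !Q_sum (big_setID A). Qed.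

Lemma Sig_sym g : (Sig c g)^T = Sig c g.
Proof. exact: tr_diag_mx. Qed.

Lemma Q_sym g : (Q g)^T = Q g.
Proof. by rewrite /Q !trmx_mul trmxK Sig_sym mulmxA. Qed.

Lemma Fm_sym g : (Fm g)^T = Fm g.
Proof. by rewrite /Fm linearD /= trmx1 Q_sym. Qed.

Lemma qf_Sig g w : phil * nrm w <= qf (Sig c g) w <= phiu * nrm w.
Proof.
rewrite /Sig qf_diag nrmE !mulr_sumr; apply/andP; split; apply: ler_sum => i _;
  rewrite mxE; have /andP[h1 h2] := hcb (enum_val i); have := sqr_ge0 (w 0 i);
  move=> h; [apply: ler_wpM2r | apply: ler_wpM2r] => //.
Qed.

Lemma qf_Q_ge0 g v : 0 <= qf (Q g) v.
Proof.
rewrite /Q qf_conj; have /andP[h _] := qf_Sig (v *m Xsub X g).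
have hp := hphil; apply: le_trans h; apply: mulr_ge0; [lra | exact: nrm_ge0].
Qed.

Lemma Fm_lb g v : nrm v <= qf (Fm g) v.
Proof. by rewrite /Fm qf_add qf1 lerDl qf_Q_ge0. Qed.

Lemma Fm_det g : 1 <= \det (Fm g).
Proof.
have [K [K0 HK]] := qf_bound (Fm g).
have Hl : forall v, 1 * nrm v <= qf (Fm g) v by move=> v; rewrite mul1r Fm_lb.
have /andP[h _] := det_bounds (Fm_sym g) ltr01 Hl
   (fun v => le_trans (ler_norm _) (HK v)).
by rewrite expr1n in h.
Qed.

Lemma Fm_unit g : Fm g \in unitmx.
Proof. by rewrite unitmxE unitfE; have := Fm_det g; apply: contraTneq => ->; rewrite ler10. Qed.

Lemma sqrt_mul_self (x : R) : 0 <= x -> sqrt x * sqrt x = x.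
Proof. by move/RleP; exact: sqrt_sqrt. Qed.

Lemma Sh2 g : Sig_half c g *m Sig_half c g = Sig c g.
Proof.
rewrite /Sig_half /Sig mulmx_diag; congr diag_mx; apply/matrixP => i j.
by rewrite !mxE sqrt_mul_self // ltW // cpos.
Qed.

Lemma Sh_sym g : (Sig_half c g)^T = Sig_half c g.
Proof. exact: tr_diag_mx. Qed.

Lemma Sig_unit g : Sig c g \in unitmx.
Proof.
rewrite unitmxE unitfE /Sig det_diag; apply: lt0r_neq0; apply: prodr_gt0 => i _.
by rewrite mxE cpos.
Qed.

Lemma detW g : \det (Wmat X c g) = \det (Fm g).
Proof.
rewrite /Wmat.
have -> : \det (Sig_half c g *m Umat X c g *m Sig_half c g) =
   \det (Sig c g *m Umat X c g) by rewrite !det_mulmx -Sh2 det_mulmx; ring.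
rewrite /Umat mulmxDr mulmxV ?Sig_unit // mulmxA sylvester /Fm /Q mulmxA.
by [].
Qed.

Lemma invF_sym g : (invmx (Fm g))^T = invmx (Fm g).
Proof. by rewrite trmx_inv Fm_sym. Qed.

Lemma nrmD k (a b : 'rV[R]_k) : nrm (a + b) = nrm a + bf 1%:M a b + bf 1%:M b a + nrm b.
Proof. by rewrite !nrm_bf bfDl !bfDr; ring. Qed.

Lemma invF_bounds g v : 0 <= qf (invmx (Fm g)) v <= nrm v.
Proof.
set G := invmx (Fm g); set z := v *m G.
have vz : v = z *m Fm g by rewrite /z -mulmxA mulVmx ?Fm_unit // mulmx1.
have e1 : qf G v = qf (Fm g) z.
  by rewrite /qf /bf {2}vz trmx_mul Fm_sym mulmxA.
have e2 : nrm v = nrm z + 2 * qf (Q g) z + nrm (z *m Q g).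
  rewrite vz /Fm mulmxDr mulmx1 nrmD.
  have -> : bf 1%:M z (z *m Q g) = qf (Q g) z.
    by rewrite /bf /qf mulmx1 trmx_mul Q_sym mulmxA.
  have -> : bf 1%:M (z *m Q g) z = qf (Q g) z by rewrite /bf /qf mulmx1.
  ring.
have e3 : qf (Fm g) z = nrm z + qf (Q g) z by rewrite /Fm qf_add qf1.
rewrite e1 e3 e2; have := qf_Q_ge0 g z; have := nrm_ge0 z; have := nrm_ge0 (z *m Q g).
move=> h1 h2 h3; apply/andP; split; lra.
Qed.

Lemma proj_bound g0 : (Xsub X g0)^T *m Xsub X g0 \in unitmx ->
  forall v, qf (1%:M - Pproj X g0) v <= qf (invmx (Fm g0)) v.
Proof.
move=> Hu v.
set X0 := Xsub X g0; set Fi := invmx (Fm g0).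
set w := v - v *m Pproj X g0; set u := v *m Pproj X g0.
have hw0 : w *m X0 = 0.
  rewrite /w mulmxBl /Pproj -/X0 -!mulmxA mulVmx // mulmx1; exact: subrr.
have hwF : w *m Fm g0 = w.
  by rewrite /Fm /Q -/X0 mulmxDr mulmx1 !mulmxA hw0 !mul0mx addr0.
have hwFi : w *m Fi = w.
  by rewrite -{1}hwF -mulmxA /Fi mulmxV ?Fm_unit // mulmx1.
have huw : bf 1%:M u w = 0.
  rewrite /bf mulmx1 /u /Pproj -/X0 -!mulmxA -trmx_mul hw0 trmx0 !mulmx0.
  by rewrite mxE.
have hsym : bf 1%:M w u = 0 by rewrite bfC ?trmx1.
have vuw : v = u + w by rewrite /w /u addrC subrK.
have hvP : v *m (1%:M - Pproj X g0) = w by rewrite mulmxBr mulmx1.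
clearbody w u.
have hbf : forall z, bf Fi w z = bf 1%:M w z by move=> z; rewrite /bf hwFi mulmx1.
have e1 : qf Fi v = qf Fi u + nrm w.
  rewrite /qf vuw bfDl !bfDr hbf hsym (bfC u w (invF_sym g0)) -/Fi hbf hsym hbf -nrm_bf.
  ring.
have e2 : qf (1%:M - Pproj X g0) v = nrm w.
  rewrite /qf /bf hvP.
  have -> : (w *m v^T) 0 0 = bf 1%:M w v by rewrite /bf mulmx1.
  rewrite vuw bfDr hsym.
  by rewrite add0r -nrm_bf.
rewrite e1 e2 lerDr; have /andP[h _] := invF_bounds g0 u; exact: h.
Qed.

Definition MD (A D : {set 'I_p}) := (Xsub X D)^T *m invmx (Fm A) *m Xsub X D.

Lemma det_ratio (g A D : {set 'I_p}) : Fm g = Fm A + Q D ->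
  \det (Fm g) = \det (Fm A) * \det (1%:M + Sig c D *m MD A D).
Proof.
move=> ->.
have -> : Fm A + Q D = Fm A *m (1%:M + invmx (Fm A) *m Q D).
  by rewrite mulmxDr mulmx1 mulmxA mulmxV ?Fm_unit // mul1mx.
rewrite det_mulmx; congr (_ * _).
rewrite /Q !mulmxA -(mulmxA (invmx (Fm A) *m Xsub X D)) sylvester.
by rewrite /MD !mulmxA.
Qed.

Lemma MD_sym (A D : {set 'I_p}) : (MD A D)^T = MD A D.
Proof. by rewrite /MD !trmx_mul trmxK invF_sym mulmxA. Qed.

Lemma qf_MD (A D : {set 'I_p}) (y : 'rV[R]_#|D|) : qf (MD A D) y = qf (invmx (Fm A)) (y *m (Xsub X D)^T).
Proof. by rewrite /MD /qf /bf trmx_mul trmxK !mulmxA. Qed.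

Lemma detG (D : {set 'I_p}) (M : 'M[R]_#|D|) a b : M^T = M -> 0 <= a -> 0 <= b ->
  (forall y, a * nrm y <= qf M y) -> (forall y, qf M y <= b * nrm y) ->
  (1 + phil * a) ^+ #|D| <= \det (1%:M + Sig c D *m M) <= (1 + phiu * b) ^+ #|D|.
Proof.
move=> HM ha hb HL HU.
have hp := hphil.
have -> : 1%:M + Sig c D *m M = 1%:M + Sig_half c D *m (Sig_half c D *m M).
  by rewrite mulmxA Sh2.
rewrite sylvester.
have TT : (1%:M + Sig_half c D *m M *m Sig_half c D)^T = 1%:M + Sig_half c D *m M *m Sig_half c D.
  by rewrite linearD /= trmx1 !trmx_mul Sh_sym HM mulmxA.
have qT : forall y, qf (1%:M + Sig_half c D *m M *m Sig_half c D) y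
    = nrm y + qf M (y *m Sig_half c D).
  by move=> y; rewrite qf_add qf1 /qf /bf trmx_mul Sh_sym !mulmxA.
have nS : forall y, nrm (y *m Sig_half c D) = qf (Sig c D) y.
  by move=> y; rewrite /nrm /qf /bf trmx_mul Sh_sym mulmxA -(mulmxA y) Sh2.
apply: det_bounds TT _ _ _.
- by apply: ltr_pwDl => //; apply: mulr_ge0 => //; lra.
- move=> y; rewrite qT; have := HL (y *m Sig_half c D); rewrite nS.
  have /andP[h1 _] := qf_Sig y; have h0 := nrm_ge0 y.
  have : a * (phil * nrm y) <= a * qf (Sig c D) y by apply: ler_wpM2l.
  move=> h3 h4; nra.
- move=> y; rewrite qT; have := HU (y *m Sig_half c D); rewrite nS.
  have /andP[_ h1] := qf_Sig y; have h0 := nrm_ge0 y.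
  have : b * qf (Sig c D) y <= b * (phiu * nrm y) by apply: ler_wpM2l.
  move=> h3 h4; nra.
Qed.

Lemma Pproj_sym g0 : (Pproj X g0)^T = Pproj X g0.
Proof. by rewrite /Pproj !trmx_mul trmxK trmx_inv trmx_mul trmxK !mulmxA. Qed.

Lemma Mres_sym g g0 : (Mres X g g0)^T = Mres X g g0.
Proof.
rewrite /Mres linearZ /= !trmx_mul trmxK linearB /= trmx1 Pproj_sym.
by rewrite !mulmxA.
Qed.

Lemma Mgram_sym g g0 : (Mgram X g g0)^T = Mgram X g g0.
Proof. by rewrite /Mgram linearZ /= trmx_mul trmxK. Qed.

Lemma Fm_det_neq0 g : \det (Fm g) != 0.
Proof. by have := Fm_det g; apply: contraTneq => ->; rewrite ler10. Qed.

Lemma partA_det (g g0 : {set 'I_p}) (lam : R) :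
  g0 \subset g -> (Xsub X g0)^T *m Xsub X g0 \in unitmx -> (0 < n)%N ->
  0 <= lam -> (forall a, eigenvalue (Mres X g g0) a -> lam <= a) ->
  (1 + phil * (n%:R * lam)) ^+ #|g :\: g0| <= \det (Wmat X c g) / \det (Wmat X c g0).
Proof.
move=> sub Hu n0 lam0 Heig.
have hp := hphil.
have eF : Fm g = Fm g0 + Q (g :\: g0).
  by rewrite /Fm (Q_split g g0) (setIidPr sub) addrA.
rewrite !detW (det_ratio eF) mulrAC mulfV ?Fm_det_neq0 // mul1r.
have HL := eig_lb (Mres_sym g g0) Heig.
have [K [K0 HK]] := qf_bound (MD g0 (g :\: g0)).
have nR : 0 < (n%:R : R) by rewrite ltr0n.
have nlam : 0 <= n%:R * lam by apply: mulr_ge0 => //; exact: ltW.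
suff Hlo : forall y, n%:R * lam * nrm y <= qf (MD g0 (g :\: g0)) y.
  have /andP[h _] := detG (MD_sym g0 (g :\: g0)) nlam K0 Hlo
      (fun y => le_trans (ler_norm _) (HK y)).
  exact: h.
move=> y; rewrite qf_MD; apply: le_trans (proj_bound Hu _).
have -> : qf (1%:M - Pproj X g0) (y *m (Xsub X (g :\: g0))^T) = n%:R * qf (Mres X g g0) y.
  rewrite /Mres /qf /bf -scalemxAr -scalemxAl mxZE mulrA mulfV ?lt0r_neq0 // mul1r.
  by rewrite trmx_mul trmxK !mulmxA.
rewrite -mulrA; apply: ler_wpM2l; [exact: ltW | exact: HL].
Qed.

Lemma eig_neg k (M : 'M[R]_k) a : eigenvalue (- M) a -> eigenvalue M (- a).
Proof.
case/eigenvalueP => v hv hv0; apply/eigenvalueP; exists v => //.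
by rewrite scaleNr -hv mulmxN opprK.
Qed.

Lemma qf_neg k (M : 'M[R]_k) y : qf (- M) y = - qf M y.
Proof. by rewrite /qf /bf mulmxN mulNmx mxNE. Qed.

Lemma partB_det (g g0 : {set 'I_p}) (C2 : R) : 0 <= C2 ->
  (forall a, eigenvalue (Mgram X g g0) a -> a <= C2) ->
  ((1 + phiu * (n%:R * C2)) ^+ #|g0 :\: g|)^-1 <= \det (Wmat X c g) / \det (Wmat X c g0).
Proof.
move=> C20 Heig.
have hp := hphil.
set h := g :&: g0.
have eFg : Fm g = Fm h + Q (g :\: g0) by rewrite /Fm (Q_split g g0) addrA.
have eFg0 : Fm g0 = Fm h + Q (g0 :\: g) by rewrite /Fm (Q_split g0 g) setIC addrA.
rewrite !detW (det_ratio eFg) (det_ratio eFg0).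
set d1 := \det (1%:M + _ *m MD h (g :\: g0)).
set d2 := \det (1%:M + _ *m MD h (g0 :\: g)).
have hdh := Fm_det h.
have Hlo0 : forall A D y, 0 * nrm y <= qf (MD A D) y.
  by move=> A D y; rewrite mul0r qf_MD; have /andP[] := invF_bounds A (y *m (Xsub X D)^T).
have [K1 [K10 HK1]] := qf_bound (MD h (g :\: g0)).
have /andP[hd1 _] := detG (MD_sym h (g :\: g0)) (lexx 0) K10 (Hlo0 h _)
      (fun y => le_trans (ler_norm _) (HK1 y)).
rewrite mulr0 addr0 expr1n -/d1 in hd1.
have nC : 0 <= n%:R * C2 by apply: mulr_ge0 => //; exact: ler0n.
have Mg : forall y, qf (Mgram X g g0) y <= C2 * nrm y.
  have Hn : (forall a, eigenvalue (- Mgram X g g0) a -> - C2 <= a).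
    by move=> a /eig_neg /Heig; lra.
  have Mn : (- Mgram X g g0)^T = - Mgram X g g0 by rewrite linearN /= Mgram_sym.
  move=> y; have := eig_lb Mn Hn y; rewrite qf_neg; lra.
have Hup : forall y, qf (MD h (g0 :\: g)) y <= n%:R * C2 * nrm y.
  move=> y; rewrite qf_MD; have /andP[_ h1] := invF_bounds h (y *m (Xsub X (g0 :\: g))^T).
  apply: le_trans h1 _.
  have [n0|n0] := posnP n.
    rewrite nrmE big1; last by move=> i _; have := leq_trans (ltn_ord i) (eq_leq n0).
    by apply: mulr_ge0 => //; exact: nrm_ge0.
  have -> : nrm (y *m (Xsub X (g0 :\: g))^T) = n%:R * qf (Mgram X g g0) y.
    rewrite /Mgram /qf /bf -scalemxAr -scalemxAl mxZE mulrA mulfV ?lt0r_neq0 ?ltr0n // mul1r.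
    by rewrite /nrm trmx_mul trmxK !mulmxA.
  rewrite -mulrA; apply: ler_wpM2l; [exact: ler0n | exact: Mg].
have /andP[hd2l hd2u] := detG (MD_sym h (g0 :\: g)) (lexx 0) nC (Hlo0 h _) Hup.
rewrite mulr0 addr0 expr1n in hd2l.
rewrite -/d2 in hd2l hd2u.
have d2p : 0 < d2 by lra.
have -> : \det (Fm h) * d1 / (\det (Fm h) * d2) = d1 / d2.
  by field; rewrite lt0r_neq0 //; lra.
apply: le_trans (_ : d2^-1 <= _).
  by rewrite lef_pV2 ?posrE //; lra.
by rewrite ler_peMl ?invr_ge0 //; lra.
Qed.

End Model.

Unset Implicit Arguments.
Set Strict Implicit.


Local Open Scope ring_scope.

Lemma natr_INR n : (n%:R : R) = INR n.
Proof.
elim: n => [|n IH] //; rewrite mulrS IH S_INR addrC //.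
Qed.

Lemma exprR (x : R) k : x ^+ k = pow x k.
Proof. by elim: k => [|k IH] //; rewrite exprS IH. Qed.

Lemma zero_not_unit k : (0 < k)%N -> (0 : 'M[R]_k) \notin unitmx.
Proof.
move=> hk; rewrite unitmxE unitfE negbK.
have -> : (0 : 'M[R]_k) = (0 : R)%:M by apply/matrixP => i j; rewrite !mxE mul0rn.
by rewrite det_scalar expr0n eqn0Ngt hk.
Qed.

Lemma npos_of (n p : nat) (X : 'M[R]_(n, p)) (g : {set 'I_p}) :
  ((Xsub X g)^T *m Xsub X g)%R \in unitmx -> (0 < #|g|)%N -> (0 < n)%N.
Proof.
move=> Hu hg; case: (posnP n) => // n0; exfalso.
move: Hu; have -> : ((Xsub X g)^T *m Xsub X g) = 0.
  apply/matrixP => i j; rewrite !mxE big1 // => l _.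
  by have := leq_trans (ltn_ord l) (eq_leq n0).
by rewrite (negPf (@zero_not_unit _ hg)).
Qed.

Lemma partA_R (n p : nat) (X : 'M[R]_(n,p)) (c : 'I_p -> R) (phil phiu : R)
  (g g0 : {set 'I_p}) (lam : R) :
  Rlt R0 phil -> (forall j, Rle phil (c j) /\ Rle (c j) phiu) ->
  g0 \subset g -> (Xsub X g0)^T *m Xsub X g0 \in unitmx -> (0 < n)%N ->
  Rle R0 lam -> (forall a, eigenvalue (Mres X g g0) a -> Rle lam a) ->
  Rle (pow (Rplus R1 (Rmult phil (Rmult (INR n) lam))) #|g :\: g0|)
      (Rdiv (\det (Wmat X c g)) (\det (Wmat X c g0))).
Proof.
move=> hp hc sub Hu n0 lam0 Heig.
have hp' : 0 < phil by apply/RltP.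
have hcb : forall j, phil <= c j <= phiu.
  by move=> j; have [h1 h2] := hc j; apply/andP; split; apply/RleP.
have lam0' : 0 <= lam by apply/RleP.
have Heig' : forall a, eigenvalue (Mres X g g0) a -> lam <= a.
  by move=> a ha; apply/RleP; exact: Heig.
have H := partA_det hp' hcb sub Hu n0 lam0' Heig'.
rewrite natr_INR exprR in H; move/RleP: H => H; exact H.
Qed.

Lemma partB_R (n p : nat) (X : 'M[R]_(n,p)) (c : 'I_p -> R) (phil phiu : R)
  (g g0 : {set 'I_p}) (C2 : R) :
  Rlt R0 phil -> (forall j, Rle phil (c j) /\ Rle (c j) phiu) -> Rle R0 C2 ->
  (forall a, eigenvalue (Mgram X g g0) a -> Rle a C2) ->
  Rle (Rinv (pow (Rplus R1 (Rmult phiu (Rmult (INR n) C2))) #|g0 :\: g|))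
      (Rdiv (\det (Wmat X c g)) (\det (Wmat X c g0))).
Proof.
move=> hp hc C20 Heig.
have hp' : 0 < phil by apply/RltP.
have hcb : forall j, phil <= c j <= phiu.
  by move=> j; have [h1 h2] := hc j; apply/andP; split; apply/RleP.
have C20' : 0 <= C2 by apply/RleP.
have Heig' : forall a, eigenvalue (Mgram X g g0) a -> a <= C2.
  by move=> a ha; apply/RleP; exact: Heig.
have H := partB_det hp' hcb C20' Heig'.
rewrite natr_INR exprR in H; move/RleP: H => H; exact H.
Qed.

Local Open Scope R_scope.

Lemma ln_le' (x y : R) : 0 < x -> x <= y -> ln x <= ln y.
Proof.
move=> hx hxy; case: (Rle_lt_or_eq_dec x y hxy) => [h| <-]; last exact: Rle_refl.
by apply: Rlt_le; apply: ln_increasing.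
Qed.

Lemma Rpower_pos (x y : R) : 0 < Rpower x y.
Proof. rewrite /Rpower; exact: exp_pos. Qed.

Theorem lemma2 (n p : nat) (X : 'M[R]_(n, p)) (beta0 : 'I_p -> R)
  (phil phiu : R)
  (Hphil : 0 < phil) (Hphi : phil <= phiu)
  (Hinv : forall g : {set 'I_p}, ((Xsub X g)^T *m Xsub X g)%R \in unitmx) :
  (* (a) *)
  (forall C3 delta : R, 0 < C3 -> 0 <= delta ->
    (forall g : {set 'I_p}, inS1 (gamma0 beta0) g ->
       forall a : R, eigenvalue (Mres X g (gamma0 beta0)) a ->
         C3 * Rpower (INR n) (- delta) <= a) ->
    forall g : {set 'I_p}, inS1 (gamma0 beta0) g ->
    forall c : 'I_p -> R, (forall j, phil <= c j <= phiu) ->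
      / 2 * (INR #|g| - INR #|gamma0 beta0|)
          * ln (1 + C3 * Rpower (INR n) (1 - delta) * phil)
        <= T2 X c g (gamma0 beta0))
  /\
  (* (b) *)
  (forall C2 : R, 0 < C2 -> gamma0 beta0 != set0 ->
    (forall g : {set 'I_p}, inS2 (gamma0 beta0) g ->
       forall a : R, eigenvalue (Mgram X g (gamma0 beta0)) a -> a <= C2) ->
    forall g : {set 'I_p}, inS2 (gamma0 beta0) g ->
    forall c : 'I_p -> R, (forall j, phil <= c j <= phiu) ->
      - (/ 2 * INR #|gamma0 beta0| * ln (1 + C2 * INR n * phiu))
        <= T2 X c g (gamma0 beta0)).
Proof.
split.
- move=> C3 delta HC3 Hdel Heig g Hg c hc.
  set g0 := gamma0 beta0 in Heig Hg *.
  have Hg' := Hg; move: Hg' => /andP[sub neq].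
  have gne : (0 < #|g|)%N.
    rewrite card_gt0; apply: contraNneq neq => g0e.
    by move: sub; rewrite g0e subset0 => /eqP ->.
  have n0 := @npos_of _ _ _ _ (Hinv g) gne.
  set lam := C3 * Rpower (INR n) (- delta).
  have lam0 : 0 <= lam.
    apply: Rlt_le; apply: Rmult_lt_0_compat => //; exact: Rpower_pos.
  have H := @partA_R _ _ _ _ _ _ _ _ _ Hphil hc sub (Hinv g0) n0 lam0 (Heig g Hg).
  have nP : 0 < INR n by apply: lt_0_INR; apply/ssrnat.ltP.
  have ex : INR n * lam = C3 * Rpower (INR n) (1 - delta).
    by rewrite /lam /Rminus Rplus_comm Rpower_plus Rpower_1 // Rmult_comm Rmult_assoc.
  rewrite ex in H.
  set x := 1 + C3 * Rpower (INR n) (1 - delta) * phil.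
  have xe : 1 + phil * (C3 * Rpower (INR n) (1 - delta)) = x by rewrite /x (Rmult_comm phil).
  rewrite xe in H.
  have xp : 0 < x.
    rewrite /x; have := Rpower_pos (INR n) (1 - delta).
    move=> h; have := Rmult_lt_0_compat _ _ (Rmult_lt_0_compat _ _ HC3 h) Hphil; Lra.lra.
  have ek : INR #|g| - INR #|g0| = INR #|g :\: g0|.
    rewrite cardsD (setIidPr sub) minus_INR //; apply/ssrnat.leP; exact: subset_leq_card.
  rewrite ek /T2 Rmult_assoc -ln_pow //.
  apply: Rmult_le_compat_l; first Lra.lra.
  apply: ln_le' => //; exact: pow_lt.
- move=> C2 HC2 _ Heig g Hg c hc.
  set g0 := gamma0 beta0 in Heig Hg *.
  have C20 : 0 <= C2 by Lra.lra.
  have H := @partB_R _ _ _ _ _ _ _ _ _ Hphil hc C20 (Heig g Hg).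
  set y := 1 + C2 * INR n * phiu.
  have ye : 1 + phiu * (INR n * C2) = y by rewrite /y (Rmult_comm phiu) (Rmult_comm (INR n)).
  rewrite ye in H.
  have nP : 0 <= INR n by apply: pos_INR.
  have y1 : 1 <= y.
    have hu : 0 <= phiu by Lra.lra.
    rewrite /y; have := Rmult_le_pos _ _ (Rmult_le_pos _ _ C20 nP) hu; Lra.lra.
  have yp : 0 < y by Lra.lra.
  set m := #|g0 :\: g|.
  have ymp : 0 < y ^ m by exact: pow_lt.
  have L0 : 0 <= ln y by rewrite -ln_1; apply: ln_le'; Lra.lra.
  have hm : INR m <= INR #|g0| by apply: le_INR; apply/ssrnat.leP; exact/subset_leq_card/subsetDl.
  have hlr := ln_le' _ _ (Rinv_0_lt_compat _ ymp) H.
  rewrite ln_Rinv // ln_pow // in hlr.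
  have : INR m * ln y <= INR #|g0| * ln y by apply: Rmult_le_compat_r.
  rewrite /T2; move: hlr; rewrite -/m; Lra.lra.
Qed.
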